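(* Let $A$ be a $3\times3$ matrix with pairwise distinct eigenvalues $\lambda_1,\lambda_2,\lambda_3$ such that $\lambda_1+\lambda_2\neq 0$, and let $h>0$. Define $$\phi=\frac{(\lambda_3^2-\lambda_2^2)(\lambda_2^2e^{\lambda_1h}-\lambda_1^2e^{\lambda_2h})-(\lambda_2^2-\lambda_1^2)(\lambda_3^2e^{\lambda_2h}-\lambda_2^2e^{\lambda_3h})}{\lambda_1\lambda_2(\lambda_2-\lambda_1)(\lambda_3^2-\lambda_2^2)-\lambda_2\lambda_3(\lambda_3-\lambda_2)(\lambda_2^2-\lambda_1^2)},$$ $$\psi=\frac{\lambda_2^2e^{\lambda_1h}-\lambda_1^2e^{\lambda_2h}-\lambda_1\lambda_2(\lambda_2-\lambda_1)\phi}{\lambda_2^2-\lambda_1^2},\qquad \theta=\frac{e^{\lambda_3h}-\psi-\lambda_3\phi}{\lambda_3^2\phi^2}.$$ Then (whenever these expressions are defined) the explicit difference scheme $$\frac{\mathbf{x}_{k+1}-\psi\mathbf{x}_k}{\phi}=A\mathbf{x}_k+\theta\phi A^2\mathbf{x}_k$$ is exact for the system $\mathbf{x}'=A\mathbf{x}$.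
   Context: A one-step difference scheme with step size $h>0$ for $\mathbf{x}'=M\mathbf{x}$ is called exact if for every initial vector $\mathbf{x}_0$ the sequence $(\mathbf{x}_k)$ it generates satisfies $\mathbf{x}_k=\mathbf{x}(kh)$ for all $k\ge 0$, where $\mathbf{x}(t)$ solves $\mathbf{x}'=M\mathbf{x}$, $\mathbf{x}(0)=\mathbf{x}_0$. *)

(* Defs.v *)
From HB Require Import structures.
From mathcomp Require Import all_boot all_order all_algebra.
From mathcomp Require Import all_classical all_reals all_analysis.
From mathcomp Require Import complex.
Set Implicit Arguments. Unset Strict Implicit. Unset Printing Implicit Defensive.
Import Order.TTheory GRing.Theory Num.Theory.
Import numFieldNormedType.Exports.
Local Open Scope ring_scope.
Local Open Scope complex_scope.

Definition cexp (R : realType) (z : R[i]) : R[i] :=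
  (expR (complex.Re z) * cos (complex.Im z)) +i* (expR (complex.Re z) * sin (complex.Im z)).

Definition has_cderiv (R : realType) (f : R -> R[i]) (t : R) (d : R[i]) : Prop :=
  is_derive t (1:R) (fun s => complex.Re (f s)) (complex.Re d) /\
  is_derive t (1:R) (fun s => complex.Im (f s)) (complex.Im d).

Definition solves_ode (R : realType) (n : nat) (M : 'M[R[i]]_n) (x : R -> 'cV[R[i]]_n) : Prop :=
  forall (t : R) (i : 'I_n), has_cderiv (fun s => x s i ord0) t ((M *m x t) i ord0).

Definition exact_scheme (R : realType) (n : nat) (M : 'M[R[i]]_n)
  (step : 'cV[R[i]]_n -> 'cV[R[i]]_n) (h : R) : Prop :=
  forall (x0 : 'cV[R[i]]_n) (x : R -> 'cV[R[i]]_n),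
    solves_ode M x -> x 0 = x0 ->
    forall k : nat, iter k step x0 = x (k%:R * h).

(* Main.v *)
Require Import Defs.
From HB Require Import structures.
From mathcomp Require Import all_boot all_order all_algebra.
From mathcomp Require Import all_classical all_reals all_analysis.
From mathcomp Require Import complex.
From mathcomp Require Import ring lra zify.
Import Order.TTheory GRing.Theory Num.Theory.
Import numFieldNormedType.Exports.
Local Open Scope ring_scope.
Local Open Scope complex_scope.

Section S.
Variable R : realType.
Implicit Types (f g : R -> R) (x df dg : R).

Lemma dM f g x df dg : is_derive x 1 f df -> is_derive x 1 g dg ->
  is_derive x 1 (fun s => f s * g s) (f x * dg + g x * df).
Proof. move=> ? ?; exact: (is_deriveM (f:=f) (g:=g)). Qed.

Lemma dD f g x df dg : is_derive x 1 f df -> is_derive x 1 g dg ->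
  is_derive x 1 (fun s => f s + g s) (df + dg).
Proof. move=> ? ?; exact: (is_deriveD (f:=f) (g:=g)). Qed.

Lemma dB f g x df dg : is_derive x 1 f df -> is_derive x 1 g dg ->
  is_derive x 1 (fun s => f s - g s) (df - dg).
Proof. move=> ? ?; exact: (is_deriveB (f:=f) (g:=g)). Qed.

Arguments dM {f g x df dg}.
Arguments dD {f g x df dg}.
Arguments dB {f g x df dg}.

Lemma dlin (a : R) x : is_derive x 1 (fun s : R => a * s) a.
Proof.
have := dM (is_derive_cst a x 1) (is_derive_id x 1).
by rewrite /= mulr1 mulr0 addr0.
Qed.

Lemma dexp (a : R) x : is_derive x 1 (fun s : R => expR (a * s)) (expR (a * x) * a).
Proof. exact: (is_derive1_comp (is_derive_expR _) (dlin a x)). Qed.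

Lemma dcos (a : R) x : is_derive x 1 (fun s : R => cos (a * s)) (- sin (a * x) * a).
Proof. exact: (is_derive1_comp (is_derive_cos _) (dlin a x)). Qed.

Lemma dsin (a : R) x : is_derive x 1 (fun s : R => sin (a * s)) (cos (a * x) * a).
Proof. exact: (is_derive1_comp (is_derive_sin _) (dlin a x)). Qed.

Lemma cexpD (z w : R[i]) : cexp (z + w) = cexp z * cexp w.
Proof.
case: z => a b; case: w => c d; rewrite /cexp /= expRD cosD sinD.
congr (_ +i* _); ring.
Qed.

Lemma cexp0 : cexp (0 : R[i]) = 1.
Proof. by rewrite /cexp /= expR0 cos0 sin0 mulr1 mulr0. Qed.


Lemma scal_exact (l : R[i]) (f : R -> R[i]) :
  (forall t, has_cderiv f t (l * f t)) -> forall t h, f (t + h) = cexp (l * h%:C) * f t.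
Proof.
case: l => a b Hf t h.
pose K (s : R) := cexp (- ((a +i* b) * s%:C)).
pose g (s : R) := K s * f s.
pose u (s : R) := complex.Re (f s). pose v (s : R) := complex.Im (f s).
pose c (s : R) := expR ((-a) * s) * cos (b * s).
pose d (s : R) := expR ((-a) * s) * sin (b * s).
have du (s : R) : is_derive s 1 u (a * u s - b * v s).
  by case: (Hf s) => + _; rewrite /u /v; case: (f s).
have dv (s : R) : is_derive s 1 v (a * v s + b * u s).
  by case: (Hf s) => _; rewrite /u /v; case: (f s) => ? ? /=; rewrite addrC.
have dc (s : R) : is_derive s 1 c (- a * c s - b * d s).
  have := dM (dexp (-a) s) (dcos b s).
  rewrite /c /d => H; apply: (is_derive_eq H); ring.
have dd (s : R) : is_derive s 1 d (- a * d s + b * c s).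
  have := dM (dexp (-a) s) (dsin b s).
  rewrite /c /d => H; apply: (is_derive_eq H); ring.
have Kc s : K s = c s +i* (- d s).
  rewrite /K /cexp /c /d /=; congr (_ +i* _).
    by rewrite !mulr0 subr0 add0r mulNr cosN.
  by rewrite !mulr0 subr0 add0r mulNr sinN mulrN.
have ReG s : complex.Re (g s) = c s * u s + d s * v s.
  by rewrite /g Kc /u /v; case: (f s) => ? ? /=; ring.
have ImG s : complex.Im (g s) = c s * v s - d s * u s.
  by rewrite /g Kc /u /v; case: (f s) => ? ? /=; ring.
have cRe : complex.Re (g (t + h)) = complex.Re (g t).
  rewrite !ReG; apply: (is_derive_0_is_cst (f := fun s => c s * u s + d s * v s)) => s.
  apply: (is_derive_eq (dD (dM (dc s) (du s)) (dM (dd s) (dv s)))); ring.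
have cIm : complex.Im (g (t + h)) = complex.Im (g t).
  rewrite !ImG; apply: (is_derive_0_is_cst (f := fun s => c s * v s - d s * u s)) => s.
  apply: (is_derive_eq (dB (dM (dc s) (dv s)) (dM (dd s) (du s)))); ring.
have eg : g (t + h) = g t.
  by move: cRe cIm; case: (g (t + h)); case: (g t) => ? ? ? ? /= -> ->.
have KK s : cexp ((a +i* b) * s%:C) * K s = 1.
  by rewrite /K -cexpD addrN cexp0.
have : cexp ((a +i* b) * (t + h)%:C) * g (t + h) = f (t + h).
  by rewrite /g mulrA KK mul1r.
move=> <-; rewrite eg /g mulrA /K -cexpD; congr (cexp _ * _).
rewrite /=; congr (_ +i* _); ring.
Qed.


Lemma dK (k : R) u x du : is_derive x 1 u du -> is_derive x 1 (fun s => k * u s) (k * du).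
Proof.
move=> H; apply: (is_derive_eq (dM (is_derive_cst k x 1) H)).
by rewrite /= mulr0 addr0.
Qed.
Arguments dK k {u x du}.

Lemma hc_add (f g : R -> R[i]) (t : R) (df dg : R[i]) : has_cderiv f t df -> has_cderiv g t dg ->
  has_cderiv (fun s => f s + g s) t (df + dg).
Proof.
rewrite /has_cderiv /= => -[fr fi] [gr gi]; split.
- have -> : (fun s => complex.Re (f s + g s)) = (fun s => complex.Re (f s) + complex.Re (g s)).
    by apply/funext => s; case: (f s); case: (g s).
  have -> : complex.Re (df + dg) = complex.Re df + complex.Re dg by case: df {fr fi}; case: dg {gr gi}.
  exact: dD.
- have -> : (fun s => complex.Im (f s + g s)) = (fun s => complex.Im (f s) + complex.Im (g s)).
    by apply/funext => s; case: (f s); case: (g s).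
  have -> : complex.Im (df + dg) = complex.Im df + complex.Im dg by case: df {fr fi}; case: dg {gr gi}.
  exact: dD.
Qed.

Lemma hc_scale (q : R[i]) (f : R -> R[i]) (t : R) (df : R[i]) : has_cderiv f t df ->
  has_cderiv (fun s => q * f s) t (q * df).
Proof.
rewrite /has_cderiv /= => -[fr fi]; case: q => a b; split.
- have -> : (fun s => complex.Re ((a +i* b) * f s)) =
            (fun s => a * complex.Re (f s) - b * complex.Im (f s)).
    by apply/funext => s; case: (f s).
  have -> : complex.Re ((a +i* b) * df) = a * complex.Re df - b * complex.Im df by case: df {fr fi}.
  exact: (is_derive_eq (dB (dK a fr) (dK b fi))).
- have -> : (fun s => complex.Im ((a +i* b) * f s)) =
            (fun s => a * complex.Im (f s) + b * complex.Re (f s)).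
    by apply/funext => s; case: (f s) => ? ? /=; rewrite addrC.
  have -> : complex.Im ((a +i* b) * df) = a * complex.Im df + b * complex.Re df.
    by case: df {fr fi} => ? ? /=; rewrite addrC.
  exact: (is_derive_eq (dD (dK a fi) (dK b fr))).
Qed.

Lemma hc_sum n (F : 'I_n -> R -> R[i]) (dF : 'I_n -> R[i]) t :
  (forall k, has_cderiv (F k) t (dF k)) ->
  has_cderiv (fun s => \sum_(k < n) F k s) t (\sum_(k < n) dF k).
Proof.
elim: n F dF => [|n IH] F dF H.
  have -> : (fun s : R => \sum_(k < 0) F k s) = (fun _ => 0).
    by apply/funext => s; rewrite big_ord0.
  rewrite big_ord0; split; exact: is_derive_cst.
have -> : (fun s : R => \sum_(k < n.+1) F k s) =
          (fun s => \sum_(k < n) F (widen_ord (leqnSn n) k) s + F ord_max s).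
  by apply/funext => s; rewrite big_ord_recr.
rewrite big_ord_recr; apply: hc_add; last exact: H.
exact: (IH (fun k => F (widen_ord (leqnSn n) k)) (fun k => dF (widen_ord (leqnSn n) k))).
Qed.

Lemma hc_mat n (M Q : 'M[R[i]]_n) (x : R -> 'cV[R[i]]_n) (r : 'I_n) t :
  solves_ode M x ->
  has_cderiv (fun s => (Q *m x s) r ord0) t ((Q *m (M *m x t)) r ord0).
Proof.
move=> Hx.
have -> : (fun s => (Q *m x s) r ord0) = (fun s => \sum_(k < n) Q r k * x s k ord0).
  by apply/funext => s; rewrite mxE.
rewrite mxE; apply: hc_sum => k; apply: hc_scale; exact: Hx.
Qed.

Lemma vec_exact n (M Q : 'M[R[i]]_n) (l : R[i]) (x : R -> 'cV[R[i]]_n) h :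
  solves_ode M x -> Q *m M = l *: Q ->
  forall t, Q *m x (t + h) = cexp (l * h%:C) *: (Q *m x t).
Proof.
move=> Hx HQ t; apply/matrixP => r c; rewrite (ord1 c) [RHS]mxE.
apply: (@scal_exact l (fun s => (Q *m x s) r ord0)) => s.
have := @hc_mat n M Q x r s Hx; rewrite mulmxA HQ -scalemxAl mxE //.
Qed.

End S.
Arguments vec_exact {R n M Q l x h}.


Lemma interp (F : fieldType) (l1 l2 l3 E1 E2 E3 : F) :
  l1 != l2 -> l1 + l2 != 0 ->
  let den := l1 * l2 * (l2 - l1) * (l3 ^+ 2 - l2 ^+ 2)
             - l2 * l3 * (l3 - l2) * (l2 ^+ 2 - l1 ^+ 2) in
  let phi := ((l3 ^+ 2 - l2 ^+ 2) * (l2 ^+ 2 * E1 - l1 ^+ 2 * E2)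
              - (l2 ^+ 2 - l1 ^+ 2) * (l3 ^+ 2 * E2 - l2 ^+ 2 * E3)) / den in
  let psi := (l2 ^+ 2 * E1 - l1 ^+ 2 * E2 - l1 * l2 * (l2 - l1) * phi)
             / (l2 ^+ 2 - l1 ^+ 2) in
  let theta := (E3 - psi - l3 * phi) / (l3 ^+ 2 * phi ^+ 2) in
  den != 0 ->
  l3 ^+ 2 * phi ^+ 2 != 0 ->
  [/\ psi + phi * (l1 + theta * phi * l1 ^+ 2) = E1,
      psi + phi * (l2 + theta * phi * l2 ^+ 2) = E2 &
      psi + phi * (l3 + theta * phi * l3 ^+ 2) = E3].
Proof.
move=> n12 s12 den phi psi theta hden hl3phi.
have l3n : l3 != 0 by move: hl3phi; apply: contra => /eqP ->; rewrite expr0n mul0r.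
have phin : phi != 0 by move: hl3phi; apply: contra => /eqP ->; rewrite expr0n mulr0.
have d12 : l2 ^+ 2 - l1 ^+ 2 != 0.
  rewrite subr_sqr mulf_neq0 //; first by rewrite subr_eq0 eq_sym.
  by rewrite addrC.
have Hth : theta = (E3 - psi - l3 * phi) / (l3 ^+ 2 * phi ^+ 2) by [].
have Hps : psi = (l2 ^+ 2 * E1 - l1 ^+ 2 * E2 - l1 * l2 * (l2 - l1) * phi)
             / (l2 ^+ 2 - l1 ^+ 2) by [].
have Hph : phi = ((l3 ^+ 2 - l2 ^+ 2) * (l2 ^+ 2 * E1 - l1 ^+ 2 * E2)
              - (l2 ^+ 2 - l1 ^+ 2) * (l3 ^+ 2 * E2 - l2 ^+ 2 * E3)) / den by [].
have Hden : den = l1 * l2 * (l2 - l1) * (l3 ^+ 2 - l2 ^+ 2)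
             - l2 * l3 * (l3 - l2) * (l2 ^+ 2 - l1 ^+ 2) by [].
clearbody theta psi phi den.
have hT : theta * phi * phi = (E3 - psi - l3 * phi) / l3 ^+ 2.
  by rewrite Hth; field; rewrite l3n phin.
have e : forall z, psi + phi * (z + theta * phi * z ^+ 2) = psi + phi * z + (E3 - psi - l3 * phi) / l3 ^+ 2 * z ^+ 2.
  by move=> z; rewrite -hT; ring.
rewrite !e; split.
- rewrite Hps Hph; move: hden; rewrite Hden => hden; field; rewrite ?l3n ?d12 ?hden //.
- rewrite Hps Hph; move: hden; rewrite Hden => hden; field; rewrite ?l3n ?d12 ?hden //.
- field; rewrite ?l3n //.
Qed.
Arguments interp {F l1 l2 l3 E1 E2 E3}.



Section Mx.
Variable F : fieldType.
Variable A : 'M[F]_3.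

Definition Qm (b c : F) : 'M[F]_3 := A *m A - (b + c) *: A + (b * c) *: 1%:M.

Lemma expand2 b c : (A - b%:M) *m (A - c%:M) = Qm b c.
Proof.
rewrite /Qm mulmxBl !mulmxBr scalar_mxC !mul_scalar_mx.
move: (A *m A) => AA; apply/matrixP => i j; rewrite !mxE; ring.
Qed.

Lemma QmC b c : Qm b c *m A = A *m Qm b c.
Proof.
rewrite /Qm mulmxDl mulmxBl mulmxDr mulmxBr -!scalemxAl -!scalemxAr mul1mx mulmx1.
by rewrite mulmxA.
Qed.

Lemma char_fact (a b c : F) :
  char_poly A = ('X - a%:P) * (('X - b%:P) * ('X - c%:P)) -> A *m Qm b c = a *: Qm b c.
Proof.
move=> H; have := Cayley_Hamilton A; rewrite H !rmorphM !rmorphB /= horner_mx_X !horner_mx_C.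
rewrite -!mulmxE expand2 mulmxBl mul_scalar_mx => /eqP; rewrite subr_eq0 => /eqP //.
Qed.

Lemma char_eq (l1 l2 l3 : F) : eigenvalue A l1 -> eigenvalue A l2 -> eigenvalue A l3 ->
  l1 != l2 -> l1 != l3 -> l2 != l3 ->
  char_poly A = ('X - l1%:P) * (('X - l2%:P) * ('X - l3%:P)).
Proof.
move=> e1 e2 e3 n12 n13 n23.
have rts : all (root (char_poly A)) [:: l1; l2; l3].
  by rewrite /= -!eigenvalue_root_char e1 e2 e3.
have u : uniq_roots [:: l1; l2; l3] by rewrite uniq_rootsE /= !inE negb_or n12 n13 n23.
have [q Hq] := uniq_roots_prod_XsubC rts u.
have mon : \prod_(z <- [:: l1; l2; l3]) ('X - z%:P) \is monic by apply: monic_prod_XsubC.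
have lq : lead_coef q = 1.
  by rewrite -(lead_coef_Mmonic _ mon) -Hq; apply/monicP: (char_poly_monic A).
have qn0 : q != 0 by rewrite -lead_coef_eq0 lq oner_neq0.
have sq : size q == 1%N.
  have := size_char_poly A; rewrite Hq size_Mmonic // size_prod_XsubC /=.
  by rewrite addnS /= => H; rewrite -(eqn_add2r 3) H.
move/size_poly1P: sq => [c _ qc]; move: lq; rewrite qc lead_coefC => c1.
by rewrite Hq qc c1 mul1r !big_cons big_nil mulr1.
Qed.


Lemma sumQ (l1 l2 l3 : F) : l1 != l2 -> l1 != l3 -> l2 != l3 ->
  ((l1 - l2) * (l1 - l3))^-1 *: Qm l2 l3 + ((l2 - l1) * (l2 - l3))^-1 *: Qm l1 l3
  + ((l3 - l1) * (l3 - l2))^-1 *: Qm l1 l2 = 1%:M.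
Proof.
move=> n12 n13 n23.
have d12 : l1 - l2 != 0 by rewrite subr_eq0.
have d13 : l1 - l3 != 0 by rewrite subr_eq0.
have d23 : l2 - l3 != 0 by rewrite subr_eq0.
have d21 : l2 - l1 != 0 by rewrite subr_eq0 eq_sym.
have d31 : l3 - l1 != 0 by rewrite subr_eq0 eq_sym.
have d32 : l3 - l2 != 0 by rewrite subr_eq0 eq_sym.
rewrite /Qm; move: (A *m A) => AA; apply/matrixP => i j; rewrite !mxE.
case: eqP => _ /=; rewrite ?mulr1n ?mulr0n; field; by rewrite ?d12 ?d13 ?d23 ?d21 ?d31 ?d32.
Qed.

Lemma SQ (psi phi th a b c : F) : A *m Qm b c = a *: Qm b c ->
  (psi *: 1%:M + phi *: (A + th *: (A *m A))) *m Qm b c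
  = (psi + phi * (a + th * a ^+ 2)) *: Qm b c.
Proof.
move=> H.
rewrite mulmxDl -!scalemxAl mul1mx mulmxDl -scalemxAl -mulmxA H -scalemxAr H.
rewrite !scalerA -scalerDl scalerA -scalerDl; congr (_ *: _); ring.
Qed.

Lemma stepS (psi phi th : F) (v : 'cV[F]_3) :
  psi *: v + phi *: (A *m v + th *: (A *m (A *m v)))
  = (psi *: 1%:M + phi *: (A + th *: (A *m A))) *m v.
Proof.
by rewrite !mulmxDl -!scalemxAl mul1mx mulmxDl -scalemxAl mulmxA.
Qed.


Lemma assemble (l1 l2 l3 psi phi th E1 E2 E3 : F) (v w : 'cV[F]_3) :
  l1 != l2 -> l1 != l3 -> l2 != l3 ->
  A *m Qm l2 l3 = l1 *: Qm l2 l3 -> A *m Qm l1 l3 = l2 *: Qm l1 l3 ->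
  A *m Qm l1 l2 = l3 *: Qm l1 l2 ->
  psi + phi * (l1 + th * l1 ^+ 2) = E1 ->
  psi + phi * (l2 + th * l2 ^+ 2) = E2 ->
  psi + phi * (l3 + th * l3 ^+ 2) = E3 ->
  Qm l2 l3 *m w = E1 *: (Qm l2 l3 *m v) ->
  Qm l1 l3 *m w = E2 *: (Qm l1 l3 *m v) ->
  Qm l1 l2 *m w = E3 *: (Qm l1 l2 *m v) ->
  psi *: v + phi *: (A *m v + th *: (A *m (A *m v))) = w.
Proof.
move=> n12 n13 n23 H1 H2 H3 p1 p2 p3 w1 w2 w3.
have HS := @sumQ l1 l2 l3 n12 n13 n23.
have hw : w = ((l1 - l2) * (l1 - l3))^-1 *: (E1 *: (Qm l2 l3 *m v))
  + ((l2 - l1) * (l2 - l3))^-1 *: (E2 *: (Qm l1 l3 *m v))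
  + ((l3 - l1) * (l3 - l2))^-1 *: (E3 *: (Qm l1 l2 *m v)).
  by rewrite -w1 -w2 -w3 !scalemxAl -!mulmxDl HS mul1mx.
have hv : (((l1 - l2) * (l1 - l3))^-1 *: Qm l2 l3 + ((l2 - l1) * (l2 - l3))^-1 *: Qm l1 l3
  + ((l3 - l1) * (l3 - l2))^-1 *: Qm l1 l2) *m v = v by rewrite HS mul1mx.
rewrite hw stepS -{1}hv mulmxA !mulmxDr -!scalemxAr (SQ _ _ _ _ _ _ H1) (SQ _ _ _ _ _ _ H2) (SQ _ _ _ _ _ _ H3).
rewrite p1 p2 p3 mulmxDl mulmxDl -!scalemxAl.
by [].
Qed.

End Mx.
Arguments Qm {F} A b c.
Arguments char_eq {F A l1 l2 l3}.
Arguments char_fact {F A a b c}.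
Arguments sumQ {F} A {l1 l2 l3}.
Arguments SQ {F A psi phi th a b c}.
Arguments assemble {F A l1 l2 l3 psi phi th E1 E2 E3 v w}.



Theorem mainTheorem12 (R : realType) (A : 'M[R[i]]_3) (l1 l2 l3 : R[i]) (h : R) :
  eigenvalue A l1 -> eigenvalue A l2 -> eigenvalue A l3 ->
  l1 != l2 -> l1 != l3 -> l2 != l3 ->
  l1 + l2 != 0 ->
  0 < h ->
  let E1 := cexp (l1 * h%:C) in
  let E2 := cexp (l2 * h%:C) in
  let E3 := cexp (l3 * h%:C) in
  let den := l1 * l2 * (l2 - l1) * (l3 ^+ 2 - l2 ^+ 2)
             - l2 * l3 * (l3 - l2) * (l2 ^+ 2 - l1 ^+ 2) in
  let phi := ((l3 ^+ 2 - l2 ^+ 2) * (l2 ^+ 2 * E1 - l1 ^+ 2 * E2)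
              - (l2 ^+ 2 - l1 ^+ 2) * (l3 ^+ 2 * E2 - l2 ^+ 2 * E3)) / den in
  let psi := (l2 ^+ 2 * E1 - l1 ^+ 2 * E2 - l1 * l2 * (l2 - l1) * phi)
             / (l2 ^+ 2 - l1 ^+ 2) in
  let theta := (E3 - psi - l3 * phi) / (l3 ^+ 2 * phi ^+ 2) in
  den != 0 ->
  l3 ^+ 2 * phi ^+ 2 != 0 ->
  exact_scheme A
    (fun xk => psi *: xk + phi *: (A *m xk + (theta * phi) *: (A *m (A *m xk)))) h.

Proof.
move=> e1 e2 e3 n12 n13 n23 s12 hpos E1 E2 E3 den phi psi theta hden hl3.
have [p1 p2 p3] : [/\ psi + phi * (l1 + theta * phi * l1 ^+ 2) = E1,
      psi + phi * (l2 + theta * phi * l2 ^+ 2) = E2 &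
      psi + phi * (l3 + theta * phi * l3 ^+ 2) = E3] := @interp _ l1 l2 l3 E1 E2 E3 n12 s12 hden hl3.
clearbody theta psi phi den.
have ch := char_eq e1 e2 e3 n12 n13 n23.
have ch2 : char_poly A = ('X - l2%:P) * (('X - l1%:P) * ('X - l3%:P)) by rewrite ch mulrCA.
have ch3 : char_poly A = ('X - l3%:P) * (('X - l1%:P) * ('X - l2%:P)).
  by rewrite ch [X in _ * X]mulrC mulrCA.
have H1 := char_fact ch. have H2 := char_fact ch2. have H3 := char_fact ch3.
have HS := sumQ A n12 n13 n23.
move=> x0 x Hx <- k.
have step_ok : forall t, psi *: x t + phi *: (A *m x t + (theta * phi) *: (A *m (A *m x t)))
   = x (t + h).
  move=> t.
  have Q1A : Qm A l2 l3 *m A = l1 *: Qm A l2 l3 by rewrite QmC H1.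
  have Q2A : Qm A l1 l3 *m A = l2 *: Qm A l1 l3 by rewrite QmC H2.
  have Q3A : Qm A l1 l2 *m A = l3 *: Qm A l1 l2 by rewrite QmC H3.
  exact: (assemble n12 n13 n23 H1 H2 H3 p1 p2 p3
    (vec_exact Hx Q1A t) (vec_exact Hx Q2A t) (vec_exact Hx Q3A t)).
elim: k => [|k IH]; first by rewrite /= mul0r.
by rewrite iterS IH step_ok; congr (x _); rewrite -natr1 mulrDl mul1r.
Qed.
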